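(* There exists $N$ such that for every integer $n\ge N$, the quantity $$S_n=\sum_{c=2}^{\lfloor n/2\rfloor}\binom{n}{c}(2^c-1)^{n-c}+\sum_{c=\lfloor n/2\rfloor+1}^{n-2}\binom{n}{c}(2^{n-c}-1)^{c}$$ satisfies $H_n\le S_n\le\big(1+(3/2)^{-n/3}\big)H_n$, where $H_n$ is the number of labeled split graphs with vertex set $[n]$ whose questioning set is empty.
   Context: $[n]=\{1,\dots,n\}$; labeled graphs on $[n]$ are distinct if their edge sets differ. A split partition of a graph $G$ is an ordered pair $(C',I')$ of disjoint sets (possibly empty) with $C'\cup I'=V(G)$, $C'$ a clique and $I'$ an independent set; $G$ is a split graph if it has a split partition. The questioning set of a split graph is the set of vertices $v$ for which there is a split partition with $v\in C'$ and a split partition with $v\in I'$. *)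

(* Defs.v *)
From Stdlib Require Import Reals.
From mathcomp Require Import all_boot.
Set Implicit Arguments. Unset Strict Implicit. Unset Printing Implicit Defensive.

(* Vertex set [n] is represented by 'I_n = {0,...,n-1}; a labeled simple graph
   is its edge set: a set of 2-element subsets of 'I_n. *)
Definition simple_graph n (E : {set {set 'I_n}}) : bool :=
  [forall e in E, #|e| == 2].

Definition adj n (E : {set {set 'I_n}}) (u v : 'I_n) : bool := [set u; v] \in E.

Definition is_clique n (E : {set {set 'I_n}}) (C : {set 'I_n}) : bool :=
  [forall u in C, forall v in C, (u != v) ==> adj E u v].

Definition is_indep n (E : {set {set 'I_n}}) (I : {set 'I_n}) : bool :=
  [forall u in I, forall v in I, ~~ adj E u v].

Definition split_partition n (E : {set {set 'I_n}}) (C I : {set 'I_n}) : bool :=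
  [&& [disjoint C & I], C :|: I == setT, is_clique E C & is_indep E I].

Definition is_split n (E : {set {set 'I_n}}) : bool :=
  [exists C, exists I, split_partition E C I].

Definition questioning n (E : {set {set 'I_n}}) : {set 'I_n} :=
  [set v | [exists C, exists I, split_partition E C I && (v \in C)]
        && [exists C, exists I, split_partition E C I && (v \in I)]].

Definition H (n : nat) : nat :=
  #|[set E : {set {set 'I_n}} |
      [&& simple_graph E, is_split E & questioning E == set0]]|.

Definition S (n : nat) : nat :=
  (\sum_(2 <= c < (n./2).+1) 'C(n, c) * (2 ^ c - 1) ^ (n - c))
  + (\sum_((n./2).+1 <= c < n - 1) 'C(n, c) * (2 ^ (n - c) - 1) ^ c).

(* Main.v *)
Require Import Defs.
From Stdlib Require Import Reals Lra.
From mathcomp Require Import all_boot zify.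
Set Implicit Arguments. Unset Strict Implicit. Unset Printing Implicit Defensive.


Lemma adjC n (E : {set {set 'I_n}}) u v : adj E u v = adj E v u.
Proof. by rewrite /adj setUC. Qed.

Lemma adj_irr n (E : {set {set 'I_n}}) u : simple_graph E -> adj E u u = false.
Proof.
move=> /forallP sE; apply/negP => uu; have := sE [set u; u].
by rewrite /adj in uu; rewrite uu /= setUid cards1.
Qed.

Lemma cliqueP n (E : {set {set 'I_n}}) (C : {set 'I_n}) :
  reflect (forall u v, u \in C -> v \in C -> u != v -> adj E u v) (is_clique E C).
Proof.
apply: (iffP forallP) => [h u v uC vC uv | h u].
  by have /forall_inP/(_ v vC)/implyP := implyP (h u) uC; apply.
apply/implyP=> uC; apply/forall_inP=> v vC; apply/implyP; exact: h.
Qed.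

Lemma indepP n (E : {set {set 'I_n}}) (I : {set 'I_n}) :
  reflect (forall u v, u \in I -> v \in I -> ~~ adj E u v) (is_indep E I).
Proof.
apply: (iffP forallP) => [h u v uI vI | h u].
  by have /forall_inP := implyP (h u) uI; apply.
apply/implyP=> uI; apply/forall_inP=> v vI; exact: h.
Qed.

Lemma spP n (E : {set {set 'I_n}}) (C I : {set 'I_n}) :
  reflect ([/\ I = ~: C, is_clique E C & is_indep E I]) (split_partition E C I).
Proof.
apply: (iffP and4P) => [[dis /eqP cov cl ind] | [-> cl ind]]; last first.
  by split=> //; [rewrite -setI_eq0 setICr | rewrite setUCr].
split=> //; apply/setP=> x; rewrite in_setC.
have : x \in C :|: I by rewrite cov inE.
rewrite inE; case/orP=> h.
  rewrite h; apply/negP=> xI.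
  by move: dis; rewrite -setI_eq0 => /eqP/setP/(_ x); rewrite !inE h xI.
rewrite h; apply/esym/negP=> xC.
by move: dis; rewrite -setI_eq0 => /eqP/setP/(_ x); rewrite !inE h xC.
Qed.

Lemma questioningP n (E : {set {set 'I_n}}) v :
  reflect ((exists C, split_partition E C (~: C) /\ v \in C) /\
           (exists C, split_partition E C (~: C) /\ v \notin C))
          (v \in questioning E).
Proof.
rewrite inE; apply: (iffP andP) => [[/existsP[C /existsP[I /andP[sp vC]]]
   /existsP[C' /existsP[I' /andP[sp' vI]]]] | [[C [sp vC]] [C' [sp' vC']]]].
  case/spP: (sp) => eI _ _; case/spP: (sp') => eI' _ _; subst I I'.
  by split; [exists C | exists C'; rewrite -in_setC].
split; apply/existsP.
  by exists C; apply/existsP; exists (~: C); rewrite sp vC.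
by exists C'; apply/existsP; exists (~: C'); rewrite sp' in_setC vC'.
Qed.


Lemma sp_unique n (E : {set {set 'I_n}}) (C C' : {set 'I_n}) :
  split_partition E C (~: C) ->
  (forall u, u \in C -> exists2 w, w \notin C & adj E u w) ->
  (forall v, v \notin C -> exists2 u, u \in C & ~~ adj E u v) ->
  split_partition E C' (~: C') -> C' = C.
Proof.
case/spP=> _ /cliqueP cl /indepP ind hA hB /spP[_ /cliqueP cl' /indepP ind'].
have sub : C \subset C'.
  apply/subsetP=> u uC; apply/negPn/negP=> uC'.
  have [w wC uw] := hA u uC.
  have wC' : w \in C'.
    apply/negPn/negP=> wC'.
    by move: (ind' u w); rewrite !in_setC uC' wC' uw => /(_ isT isT).
  have [u' u'C nu'w] := hB w wC.
  have u'C' : u' \notin C'.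
    apply/negP=> u'C'; apply/negP: nu'w; rewrite negbK adjC; apply: cl' => //.
    by apply/eqP=> ew; move: wC; rewrite ew u'C.
  have uu' : u != u' by apply/eqP=> e; move: nu'w; rewrite -e uw.
  by move: (ind' u u'); rewrite !in_setC uC' u'C' (cl u u' uC u'C uu') => /(_ isT isT).
apply/eqP; rewrite eqEsubset sub andbT; apply/subsetP=> x xC'.
apply/negPn/negP=> xC.
have [u uC nux] := hB x xC.
have xu : x != u by apply/eqP=> e; move: xC; rewrite e uC.
by apply/negP: nux; rewrite negbK adjC; apply: cl' => //; apply: (subsetP sub).
Qed.

Lemma q_empty n (E : {set {set 'I_n}}) (C : {set 'I_n}) :
  split_partition E C (~: C) ->
  (forall u, u \in C -> exists2 w, w \notin C & adj E u w) ->
  (forall v, v \notin C -> exists2 u, u \in C & ~~ adj E u v) ->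
  questioning E = set0.
Proof.
move=> sp hA hB; apply/setP=> v; rewrite in_set0; apply/negP.
case/questioningP=> [[C1 [sp1 v1]] [C2 [sp2 v2]]].
move: v1 v2; rewrite (sp_unique sp hA hB sp1) (sp_unique sp hA hB sp2).
by move=> ->.
Qed.

Lemma q_nonfull n (E : {set {set 'I_n}}) (C : {set 'I_n}) v :
  simple_graph E -> split_partition E C (~: C) -> v \notin C ->
  (forall u, u \in C -> adj E u v) -> v \in questioning E.
Proof.
move=> sE sp vC hv; apply/questioningP; split; last by exists C.
exists (v |: C); split; last by rewrite setU11.
case/spP: sp => _ /cliqueP cl /indepP ind.
apply/spP; split=> //.
  apply/cliqueP=> x y; rewrite !in_setU1.
  case/orP=> [/eqP -> | xC]; case/orP=> [/eqP -> | yC].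
  - by rewrite eqxx.
  - by rewrite adjC; move=> _; apply: hv.
  - by move=> _; apply: hv.
  - exact: cl.
apply/indepP=> x y; rewrite !in_setC !in_setU1 !negb_or => /andP[_ xC] /andP[_ yC].
by apply: ind; rewrite in_setC.
Qed.

Lemma q_noneighbor n (E : {set {set 'I_n}}) (C : {set 'I_n}) u :
  simple_graph E -> split_partition E C (~: C) -> u \in C ->
  (forall w, w \notin C -> ~~ adj E u w) -> u \in questioning E.
Proof.
move=> sE sp uC hu; apply/questioningP; split; first by exists C.
exists (C :\ u); split; last by rewrite in_setD1 eqxx.
case/spP: sp => _ /cliqueP cl /indepP ind.
apply/spP; split=> //.
  by apply/cliqueP=> x y; rewrite !in_setD1 => /andP[_ xC] /andP[_ yC]; apply: cl.
apply/indepP=> x y; rewrite !in_setC !in_setD1 !negb_and !negbK.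
case/orP=> [/eqP -> | xC]; case/orP=> [/eqP -> | yC].
- by rewrite adj_irr.
- by apply: hu.
- by rewrite adjC; apply: hu.
- by apply: ind; rewrite in_setC.
Qed.


Definition G n (C : {set 'I_n}) : {set {set {set 'I_n}}} :=
  [set E : {set {set 'I_n}} |
     [&& simple_graph E, split_partition E C (~: C) & questioning E == set0]].

Definition Rfam n (C : {set 'I_n}) : {set {set 'I_n}} := powerset C :\ C.

Definition Good n (C : {set 'I_n}) : {set {ffun 'I_n -> {set 'I_n}}} :=
  [set f : {ffun 'I_n -> {set 'I_n}} | (f \in pffun_on set0 (~: C) (Rfam C))
      && [forall u in C, exists v, u \in f v]].

Definition phi n (C : {set 'I_n}) (E : {set {set 'I_n}}) : {ffun 'I_n -> {set 'I_n}} :=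
  [ffun v => if v \in C then set0 else [set u in C | adj E u v]].

Definition padj n (C : {set 'I_n}) (f : {ffun 'I_n -> {set 'I_n}}) (x y : 'I_n) : bool :=
  (x != y) && [|| (x \in C) && (y \in C), [&& x \in C, y \notin C & x \in f y]
                | [&& y \in C, x \notin C & y \in f x]].

Definition psi n (C : {set 'I_n}) (f : {ffun 'I_n -> {set 'I_n}}) : {set {set 'I_n}} :=
  [set e : {set 'I_n} | [exists x, exists y, (e == [set x; y]) && padj C f x y]].

Lemma pffP (aT rT : finType) (y : rT) (D : {pred aT}) (R : {pred rT}) (f : {ffun aT -> rT}) :
  f \in pffun_on y D R <-> (forall x, x \notin D -> f x = y) /\ (forall x, x \in D -> f x \in R).
Proof.
split.
  case/pffun_onP=> /supportP h1 h2; split; first exact: h1.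
  by move=> x xD; apply: h2; exact: image_f.
case=> h1 h2; apply/pffun_onP; split; first by apply/supportP.
by move=> z /imageP[x xD ->]; apply: h2.
Qed.

Lemma set2_eq (T : finType) (a b x y : T) :
  [set a; b] = [set x; y] -> (x = a /\ y = b) \/ (x = b /\ y = a).
Proof.
move=> e.
have xi : x \in [set a; b] by rewrite e set21.
have yi : y \in [set a; b] by rewrite e set22.
have ai : a \in [set x; y] by rewrite -e set21.
have bi : b \in [set x; y] by rewrite -e set22.
move: xi yi ai bi; rewrite !in_set2.
by do 4 (case/orP=> /eqP ?; subst); auto.
Qed.

Lemma padjC n (C : {set 'I_n}) f x y : padj C f x y = padj C f y x.
Proof.
rewrite /padj eq_sym; congr (_ && _).
by case: (x \in C); case: (y \in C); rewrite ?orbF ?andbF //= orbC.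
Qed.

Lemma psi_simple n (C : {set 'I_n}) f : simple_graph (psi C f).
Proof.
apply/forall_inP=> e; rewrite inE => /existsP[x /existsP[y /andP[/eqP -> /andP[xy _]]]].
by rewrite cards2 xy.
Qed.

Lemma psi_adj n (C : {set 'I_n}) f a b : adj (psi C f) a b = padj C f a b.
Proof.
rewrite /adj inE; apply/existsP/idP => [[x /existsP[y /andP[/eqP e p]]] | p].
  by case: (set2_eq e) p => [[-> ->] | [-> ->]] //; rewrite padjC.
by exists a; apply/existsP; exists b; rewrite eqxx.
Qed.

Lemma edge_ext n (E E' : {set {set 'I_n}}) :
  simple_graph E -> simple_graph E' -> (forall x y, adj E x y = adj E' x y) -> E = E'.
Proof.
move=> /forall_inP s /forall_inP s' h.
have k : forall (A B : {set {set 'I_n}}), (forall e, e \in A -> #|e| == 2) ->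
   (forall x y, adj A x y = adj B x y) -> A \subset B.
  move=> A B sA hAB; apply/subsetP=> e eA.
  case/cards2P: (sA e eA) => x [y [_ ee]]; subst e.
  by have := hAB x y; rewrite /adj eA => <-.
by apply/eqP; rewrite eqEsubset !k // => x y; rewrite h.
Qed.


Lemma Good_props n (C : {set 'I_n}) f : f \in Good C ->
  [/\ (forall v, v \in C -> f v = set0), (forall v, v \notin C -> f v \proper C)
    & (forall u, u \in C -> exists v, u \in f v)].
Proof.
rewrite inE => /andP[/pffP[h0 hR] /forall_inP hex]; split.
- by move=> v vC; apply: h0; rewrite in_setC negbK.
- move=> v vC; have := hR v; rewrite in_setC => /(_ vC).
  by rewrite /Rfam in_setD1 powersetE properEneq.
- by move=> u uC; have /existsP := hex u uC.
Qed.

Lemma Good_sub n (C : {set 'I_n}) f : f \in Good C -> forall v, f v \subset C.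
Proof.
case/Good_props=> h0 hp _ v; case: (boolP (v \in C)) => vC.
  by rewrite h0 ?sub0set.
by have /properP[] := hp v vC.
Qed.

Lemma padj_cross n (C : {set 'I_n}) f u v : u \in C -> v \notin C ->
  padj C f u v = (u \in f v).
Proof.
move=> uC vC; have uv : u != v by apply/eqP=> e; move: vC; rewrite -e uC.
by rewrite /padj uv uC (negbTE vC) /= ?andbF ?orbF.
Qed.

Lemma psi_in_G n (C : {set 'I_n}) f : f \in Good C -> psi C f \in G C.
Proof.
move=> fG; have [h0 hp hex] := Good_props fG; have hs := Good_sub fG.
have sp : split_partition (psi C f) C (~: C).
  apply/spP; split=> //.
    apply/cliqueP=> x y xC yC xy; by rewrite psi_adj /padj xy xC yC.
  apply/indepP=> x y; rewrite !in_setC=> xC yC.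
  by rewrite psi_adj /padj (negbTE xC) (negbTE yC) /= !andbF.
rewrite inE psi_simple sp /=; apply/eqP; apply: (q_empty sp).
  move=> u uC; have [v uv] := hex u uC.
  have vC : v \notin C by apply/negP=> vC; move: uv; rewrite h0 ?inE.
  by exists v => //; rewrite psi_adj padj_cross.
move=> v vC; have /properP[_ [u uC nuv]] := hp v vC.
by exists u => //; rewrite psi_adj padj_cross.
Qed.

Lemma phi_psi n (C : {set 'I_n}) f : f \in Good C -> phi C (psi C f) = f.
Proof.
move=> fG; have [h0 hp hex] := Good_props fG; have hs := Good_sub fG.
apply/ffunP=> v; rewrite ffunE; case: ifP=> vC; first by rewrite h0.
apply/setP=> u; rewrite inE psi_adj; case: (boolP (u \in C)) => uC /=.
  by rewrite padj_cross // vC.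
by apply/esym/negP=> uf; move: uC; rewrite (subsetP (hs v) u uf).
Qed.

Lemma phi_in_Good n (C : {set 'I_n}) E : E \in G C -> phi C E \in Good C.
Proof.
rewrite inE => /and3P[sE sp /eqP q0].
rewrite inE; apply/andP; split.
  apply/pffP; split=> v; rewrite in_setC ?negbK => vC; rewrite ffunE.
    by rewrite vC.
  rewrite (negbTE vC) /Rfam in_setD1 powersetE; apply/andP; split.
    apply/negP=> /eqP e.
    have : v \in questioning E.
      apply: (q_nonfull sE sp vC) => u uC.
      by move: uC; rewrite -{1}e inE => /andP[].
    by rewrite q0 inE.
  by apply/subsetP=> u; rewrite inE => /andP[].
apply/forall_inP=> u uC; apply: contraT => /existsPn hn.
have : u \in questioning E.
  apply: (q_noneighbor sE sp uC) => w wC.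
  by have := hn w; rewrite ffunE (negbTE wC) inE uC.
by rewrite q0 inE.
Qed.

Lemma psi_phi n (C : {set 'I_n}) E : E \in G C -> psi C (phi C E) = E.
Proof.
move=> EG; have := EG; rewrite inE => /and3P[sE sp _].
case/spP: (sp) => _ /cliqueP cl /indepP ind.
apply: edge_ext => //; first exact: psi_simple.
move=> x y; rewrite psi_adj.
case: (eqVneq x y) => [<- | xy]; first by rewrite adj_irr // /padj eqxx.
rewrite /padj xy /= !ffunE.
case xC: (x \in C); case yC: (y \in C) => /=.
- by rewrite cl.
- by rewrite inE xC orbF.
- by rewrite inE yC adjC.
- by apply/esym/negbTE/ind; rewrite in_setC ?xC ?yC.
Qed.

Lemma card_G n (C : {set 'I_n}) : #|G C| = #|Good C|.
Proof.
have -> : G C = [set psi C f | f in Good C].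
  apply/setP=> E; apply/idP/imsetP => [EG | [f fG ->]].
    by exists (phi C E); [apply: phi_in_Good | rewrite psi_phi].
  exact: psi_in_G.
apply: card_in_imset => f g fG gG e.
by rewrite -(phi_psi fG) -(phi_psi gG) e.
Qed.


Definition compl n (E : {set {set 'I_n}}) : {set {set 'I_n}} :=
  [set e : {set 'I_n} | (#|e| == 2) && (e \notin E)].

Lemma compl_adj n (E : {set {set 'I_n}}) u v : adj (compl E) u v = (u != v) && ~~ adj E u v.
Proof. by rewrite /adj inE cards2; case: (u != v). Qed.

Lemma compl_simple n (E : {set {set 'I_n}}) : simple_graph (compl E).
Proof. by apply/forall_inP=> e; rewrite inE => /andP[]. Qed.

Lemma compl_clique n (E : {set {set 'I_n}}) (C : {set 'I_n}) : simple_graph E ->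
  is_clique (compl E) C = is_indep E C.
Proof.
move=> sE; apply/cliqueP/indepP => h u v uC vC.
  case: (eqVneq u v) => [<- | uv]; first by rewrite adj_irr.
  by have := h u v uC vC uv; rewrite compl_adj uv.
by move=> uv; rewrite compl_adj uv h.
Qed.

Lemma compl_indep n (E : {set {set 'I_n}}) (C : {set 'I_n}) :
  is_indep (compl E) C = is_clique E C.
Proof.
apply/indepP/cliqueP => h u v uC vC.
  by move=> uv; have := h u v uC vC; rewrite compl_adj uv /= negbK.
by rewrite compl_adj; case: (eqVneq u v) => //= uv; rewrite h.
Qed.

Lemma compl_sp n (E : {set {set 'I_n}}) (C I : {set 'I_n}) : simple_graph E ->
  split_partition (compl E) C I = split_partition E I C.
Proof.
move=> sE; rewrite /split_partition compl_clique // compl_indep disjoint_sym setUC.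
by case: is_clique; case: is_indep; rewrite ?andbF.
Qed.

Lemma compl_q n (E : {set {set 'I_n}}) : simple_graph E -> questioning (compl E) = questioning E.
Proof.
move=> sE; apply/setP=> v; apply/questioningP/questioningP => [[[C [s1 v1]] [C' [s2 v2]]]|[[C [s1 v1]] [C' [s2 v2]]]].
- split.
    by exists (~: C'); rewrite -compl_sp // setCK in_setC v2; split.
  by exists (~: C); rewrite -compl_sp // setCK in_setC v1; split.
- split.
    by exists (~: C'); rewrite compl_sp // setCK in_setC v2; split.
  by exists (~: C); rewrite compl_sp // setCK in_setC v1; split.
Qed.

Lemma complK n (E : {set {set 'I_n}}) : simple_graph E -> compl (compl E) = E.
Proof.
move=> /forall_inP sE; apply/setP=> e; rewrite !inE negb_and negbK.
case: (boolP (e \in E)) => eE /=; first by rewrite orbT sE.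
by rewrite orbF; case: (#|e| == 2).
Qed.

Lemma compl_G n (C : {set 'I_n}) E : E \in G C -> compl E \in G (~: C).
Proof.
rewrite !inE => /and3P[sE sp q].
by rewrite compl_simple compl_sp // setCK sp compl_q.
Qed.

Lemma card_G_le n (C : {set 'I_n}) : #|G C| <= #|G (~: C)|.
Proof.
rewrite -(card_in_imset (f := @compl n) (D := G C)); last first.
  move=> E E' EG E'G e; rewrite -(complK (E := E)) ?e ?complK //.
    by move: E'G; rewrite inE => /and3P[].
  by move: EG; rewrite inE => /and3P[].
by apply: subset_leq_card; apply/subsetP=> x /imsetP[E EG ->]; apply: compl_G.
Qed.

Lemma card_G_compl n (C : {set 'I_n}) : #|G (~: C)| = #|G C|.
Proof. by apply/eqP; rewrite eqn_leq card_G_le -{2}(setCK C) card_G_le. Qed.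

Definition Hset n := [set E : {set {set 'I_n}} |
      [&& simple_graph E, is_split E & questioning E == set0]].

Lemma G_uniq n (C C' : {set 'I_n}) E : E \in G C -> E \in G C' -> C = C'.
Proof.
rewrite !inE => /and3P[_ sp /eqP q] /and3P[_ sp' _].
apply/setP=> v; apply/idP/idP => h; apply: contraT => h'.
  have : v \in questioning E by apply/questioningP; split; [exists C | exists C'].
  by rewrite q inE.
have : v \in questioning E by apply/questioningP; split; [exists C' | exists C].
by rewrite q inE.
Qed.

Lemma H_sum n : H n = \sum_(C : {set 'I_n}) #|G C|.
Proof.
rewrite /H -/(Hset n) -sum1_card.
transitivity (\sum_(E in Hset n) \sum_(C : {set 'I_n}) (E \in G C : nat)).
  apply: eq_bigr => E; rewrite inE => /and3P[sE /existsP[C /existsP[I sp]] q].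
  have [eI _ _] := spP _ _ _ sp; subst I.
  have EG : E \in G C by rewrite inE sE sp q.
  rewrite (bigD1 C) //= EG big1 // => C' C'C.
  by apply/eqP; rewrite eqb0; apply/negP=> EG'; move: C'C; rewrite (G_uniq EG EG') eqxx.
transitivity (\sum_(C : {set 'I_n}) \sum_(E in Hset n) (E \in G C : nat)); first exact: exchange_big.
apply: eq_bigr => C _.
rewrite big_mkcond /= -sum1_card [RHS]big_mkcond /=; apply: eq_bigr => E _.
case: (boolP (E \in G C)) => EG; last by case: (E \in Hset n).
suff -> : E \in Hset n by [].
move: EG; rewrite !inE => /and3P[sE sp ->]; rewrite sE andbT.
by apply/existsP; exists C; apply/existsP; exists (~: C).
Qed.


Lemma card_bigcup_le (I T : finType) (P : {pred I}) (F : I -> {set T}) :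
  #|\bigcup_(i in P) F i| <= \sum_(i in P) #|F i|.
Proof.
apply: (big_ind2 (fun (A : {set T}) (k : nat) => #|A| <= k)) => //.
  by rewrite cards0.
move=> A1 k1 A2 k2 h1 h2; apply: leq_trans (leq_card_setU A1 A2) _.
exact: leq_add.
Qed.

Lemma cardC' n (C : {set 'I_n}) : #|~: C| = n - #|C|.
Proof. move: (cardsC C); rewrite card_ord => e1; lia. Qed.

Definition Pset n (C : {set 'I_n}) : {set {ffun 'I_n -> {set 'I_n}}} :=
  [set f | f \in pffun_on set0 (~: C) (Rfam C)].

Lemma card_Rfam n (C : {set 'I_n}) : #|Rfam C| = 2 ^ #|C| - 1.
Proof.
by rewrite -card_powerset (cardsD1 C (powerset C)) powersetE subxx add1n subn1.
Qed.

Lemma card_Pset n (C : {set 'I_n}) : #|Pset C| = (2 ^ #|C| - 1) ^ (n - #|C|).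
Proof. by rewrite cardsE card_pffun_on card_Rfam cardC'. Qed.

Lemma Good_le n (C : {set 'I_n}) : #|Good C| <= (2 ^ #|C| - 1) ^ (n - #|C|).
Proof.
rewrite -card_Pset; apply: subset_leq_card; apply/subsetP=> f.
by rewrite !inE => /andP[].
Qed.

Lemma Good_ge n (C : {set 'I_n}) :
  (2 ^ #|C| - 1) ^ (n - #|C|) <= #|Good C| + #|C| * (2 ^ (#|C| - 1)) ^ (n - #|C|).
Proof.
pose B u := [set f : {ffun 'I_n -> {set 'I_n}} | f \in pffun_on set0 (~: C) (powerset (C :\ u))].
have cB : forall u, u \in C -> #|B u| = (2 ^ (#|C| - 1)) ^ (n - #|C|).
  move=> u uC; rewrite cardsE card_pffun_on card_powerset cardC'.
  by rewrite (cardsD1 u C) uC add1n subn1.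
rewrite -card_Pset.
apply: leq_trans (_ : #|Good C :|: \bigcup_(u in C) B u| <= _).
  apply: subset_leq_card; apply/subsetP=> f; rewrite inE => fP.
  case: (boolP (f \in Good C)) => fG; first by rewrite in_setU fG.
  rewrite in_setU (negbTE fG) /=; move: fG; rewrite inE fP /= => /forall_inPn[u uC /existsPn hu].
  apply/bigcupP; exists u => //; rewrite inE.
  case/pffP: fP => h0 hR; apply/pffP; split=> // x xC.
  have := hR x xC; rewrite /Rfam in_setD1 powersetE => /andP[_ sub].
  rewrite powersetE; apply/subsetP=> y yf; rewrite in_setD1 (subsetP sub y yf) andbT.
  by apply/eqP=> e; move: (hu x); rewrite -e yf.
apply: leq_trans (leq_card_setU _ _) _; rewrite leq_add2l.
apply: leq_trans (card_bigcup_le _ _) _.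
rewrite (eq_bigr (fun _ => (2 ^ (#|C| - 1)) ^ (n - #|C|))); last by move=> u uC; rewrite cB.
by rewrite sum_nat_const.
Qed.

Lemma Good_c1 n (C : {set 'I_n}) : #|C| = 1 -> #|Good C| = 0.
Proof.
move=> c1; apply/eqP; rewrite cards_eq0; apply/eqP/setP=> f; rewrite in_set0.
apply/negP=> fG; have [h0 hp hex] := Good_props fG.
have [u uC] : exists u, u \in C by apply/set0Pn; rewrite -card_gt0 c1.
have [v uv] := hex u uC.
have vC : v \notin C by apply/negP=> vC; move: uv; rewrite h0 ?inE.
have /properP[sub _] := hp v vC; have := hp v vC.
have -> : f v = C.
  apply/eqP; rewrite eqEcard sub c1 card_gt0; apply/set0Pn; by exists u.
by rewrite properE subxx.
Qed.


Lemma growth b : 12 <= b -> 6 * b.+1 * 2 ^ b <= 3 ^ b.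
Proof.
elim: b => [//|b IH] hb.
case: (ltngtP b 11) => [hlt | hgt | ->]; first by lia.
  have := IH hgt; rewrite !expnS => h; nia.
by rewrite !expnS; lia.
Qed.

Lemma step1 c m : 2 <= c -> 3 ^ m * (2 ^ (c - 1)) ^ m <= 2 ^ m * (2 ^ c - 1) ^ m.
Proof.
move=> hc; rewrite -!expnMn; case: m => [//|m]; rewrite leq_exp2r //.
have e : 2 ^ c = 2 * 2 ^ (c - 1) by rewrite -expnS; congr (_ ^ _); lia.
have h2 : 2 <= 2 ^ (c - 1) by rewrite -{1}(expn1 2) leq_pexp2l //; lia.
rewrite e; lia.
Qed.

Lemma pow23 k : 2 ^ k <= 3 ^ k.
Proof. elim: k => // k IH; rewrite !expnS; lia. Qed.

Lemma key c m a P g X : 2 <= c -> c <= m -> 3 * a <= 2 * m + 2 -> a <= m -> 40 <= m ->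
  P = (2 ^ c - 1) ^ m -> X = (2 ^ (c - 1)) ^ m -> P <= g + c * X ->
  P * 3 ^ a <= (3 ^ a + 2 ^ a) * g.
Proof.
move=> hc hcm ha ham hm eP eX hP.
set b := m - a.
have hb : 12 <= b by rewrite /b; lia.
have em : m = a + b by rewrite /b; lia.
have s1 : 3 ^ a * 3 ^ b * X <= 2 ^ a * 2 ^ b * P.
  by rewrite -!expnD -em eP eX step1.
have s2 : 2 * c * 2 ^ b <= 3 ^ b.
  apply: leq_trans (growth hb); rewrite leq_mul2r; apply/orP; right; lia.
have s0 := pow23 a.
have b3 : 0 < 3 ^ b by rewrite expn_gt0.
have s3 : (3 ^ a + 2 ^ a) * (c * X) <= 2 ^ a * P.
  rewrite -(leq_pmul2l b3).
  move: s1 s2 s0; set A3 := 3 ^ a; set A2 := 2 ^ a; set B3 := 3 ^ b; set B2 := 2 ^ b => s1 s2 s0.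
  have t1 : B3 * ((A3 + A2) * (c * X)) <= 2 * c * (A3 * B3 * X) by nia.
  have t2 : 2 * c * (A3 * B3 * X) <= 2 * c * (A2 * B2 * P) by rewrite leq_mul2l s1 orbT.
  have t3 : 2 * c * (A2 * B2 * P) <= B3 * (A2 * P) by nia.
  lia.
have s4 : (3 ^ a + 2 ^ a) * P <= (3 ^ a + 2 ^ a) * g + (3 ^ a + 2 ^ a) * (c * X).
  by rewrite -mulnDr leq_mul2l hP orbT.
lia.
Qed.


Definition lo n c := if 2 <= c then (2 ^ c - 1) ^ (n - c) else 0.
Definition tn n c := if c <= n./2 then lo n c else lo n (n - c).
Definition aa n := (n + 2) %/ 3.

Lemma G_lo n (C : {set 'I_n}) : 1 <= n -> #|G C| <= lo n #|C|.
Proof.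
move=> n1; rewrite card_G /lo; case: ifP => h2; first exact: Good_le.
case e: #|C| => [|[|k]].
- by have := Good_le C; rewrite e subn0 expn0 subnn exp0n.
- by rewrite Good_c1.
- by move: h2; rewrite e.
Qed.

Lemma G_lo2 n (C : {set 'I_n}) : 100 <= n -> #|C| <= n./2 ->
  lo n #|C| * 3 ^ aa n <= (3 ^ aa n + 2 ^ aa n) * #|G C|.
Proof.
move=> hn hc; rewrite /lo; case: ifP => h2 //.
rewrite card_G; apply: (key (c := #|C|) (m := n - #|C|) (X := (2 ^ (#|C| - 1)) ^ (n - #|C|))) => //;
  rewrite ?/aa; try lia.
exact: Good_ge.
Qed.

Lemma perC_le n (C : {set 'I_n}) : 100 <= n -> #|G C| <= tn n #|C|.
Proof.
move=> hn; rewrite /tn; case: ifP => hc; first by apply: G_lo; lia.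
by rewrite -card_G_compl -cardC'; apply: G_lo; lia.
Qed.

Lemma perC_ge n (C : {set 'I_n}) : 100 <= n ->
  tn n #|C| * 3 ^ aa n <= (3 ^ aa n + 2 ^ aa n) * #|G C|.
Proof.
move=> hn; rewrite /tn; case: ifP => hc; first by apply: G_lo2.
rewrite -card_G_compl -cardC'; apply: G_lo2 => //; rewrite cardC'; lia.
Qed.

Lemma card_le_n n (C : {set 'I_n}) : #|C| <= n.
Proof. by move: (cardsC C); rewrite card_ord => e; lia. Qed.

Lemma sum_card n (F : nat -> nat) :
  \sum_(C : {set 'I_n}) F #|C| = \sum_(c < n.+1) 'C(n, c) * F c.
Proof.
rewrite (partition_big (fun C : {set 'I_n} => (inord #|C| : 'I_n.+1)) xpredT) //.
apply: eq_bigr => j _.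
rewrite (eq_bigl (fun C : {set 'I_n} => C \in [set C : {set 'I_n} | #|C| == j])); last first.
  move=> C; rewrite inE /=; apply/eqP/eqP => [<- | e].
    by rewrite inordK // ltnS card_le_n.
  by apply: val_inj; rewrite /= inordK // ltnS card_le_n.
rewrite (eq_bigr (fun _ => F j)); last by move=> C; rewrite inE => /eqP ->.
by rewrite sum_nat_const card_draws card_ord.
Qed.


Lemma S_eq n : 4 <= n -> S n = \sum_(c < n.+1) 'C(n, c) * tn n c.
Proof.
move=> hn.
rewrite -(big_mkord xpredT (fun c => 'C(n, c) * tn n c)).
rewrite (@big_cat_nat _ _ _ (n - 1) 0 n.+1) /=; [|lia|lia].
rewrite (@big_cat_nat _ _ _ (n./2).+1 0 (n - 1)) /=; [|lia|lia].
rewrite (@big_cat_nat _ _ _ 2 0 (n./2).+1) /=; [|lia|lia].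
have P1 : \sum_(0 <= i < 2) 'C(n, i) * tn n i = 0.
  rewrite big_nat_recl // big_nat_recl // big_geq // /tn /lo /=.
  have -> : 1 <= n./2 by lia.
  by rewrite !muln0.
have P4 : \sum_(n - 1 <= i < n.+1) 'C(n, i) * tn n i = 0.
  have -> : n.+1 = (n - 1).+2 by lia.
  rewrite big_nat_recl // big_nat_recl // big_geq //.
  rewrite /tn /lo.
  have -> : n - (n - 1) = 1 by lia.
  have -> : n - (n - 1).+1 = 0 by lia.
  have -> : n - 1 <= n./2 = false by lia.
  have -> : n - 1 < n./2 = false by lia.
  by rewrite !muln0.
rewrite P1 P4 add0n addn0 /S; congr (_ + _).
  apply: eq_big_nat => c /andP[h1 h2]; rewrite /tn /lo.
  have -> : c <= n./2 by lia.
  by have -> : 2 <= c by lia.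
apply: eq_big_nat => c /andP[h1 h2]; rewrite /tn /lo.
have -> : c <= n./2 = false by lia.
have -> : 2 <= n - c by lia.
by have -> : n - (n - c) = c by lia.
Qed.

Local Open Scope R_scope.
Lemma INR_expn k m : INR (k ^ m)%N = (INR k ^ m).
Proof.
elim: m => [|m IH]; first by rewrite expn0.
by rewrite expnS mulnE mult_INR IH /=.
Qed.

Lemma real_step (s h a n : nat) : (s * 3 ^ a <= (3 ^ a + 2 ^ a) * h)%N -> (n <= 3 * a)%N ->
  Rle (INR s) (Rmult (Rplus (INR 1) (Rpower (Rdiv (INR 3) (INR 2))
      (Rdiv (Ropp (INR n)) (INR 3)))) (INR h)).
Proof.
move=> hs hna.
have e2 : INR 2 = 2 by simpl; lra.
have e3 : INR 3 = 3 by simpl; lra.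
have e1 : INR 1 = 1 by [].
have hR : (INR s * INR (3 ^ a)%N <= (INR (3 ^ a)%N + INR (2 ^ a)%N) * INR h).
  rewrite -plus_INR -!mult_INR; apply: le_INR; apply/leP; rewrite -mulnE -addnE; exact: hs.
have hn : (INR n <= 3 * INR a).
  by rewrite -e3 -mult_INR; apply: le_INR; apply/leP; rewrite -mulnE.
rewrite !INR_expn e2 e3 in hR *; rewrite e1.
have A3p : (0 < 3 ^ a) by apply: pow_lt; lra.
have A2p : (0 < 2 ^ a) by apply: pow_lt; lra.
have hh : (0 <= INR h) by apply: pos_INR.
have d1 : (2 ^ a / 3 ^ a <= Rpower (3 / 2) (- INR n / 3)).
  have -> : (2 ^ a / 3 ^ a = Rpower (3 / 2) (- INR a)).
    rewrite Rpower_Ropp Rpower_pow; last lra.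
    have e : ((3 / 2) ^ a * 2 ^ a = 3 ^ a).
      by rewrite -Rpow_mult_distr; congr (_ ^ _); field.
    have nz : ((3 / 2) ^ a <> 0) by apply: pow_nonzero; lra.
    rewrite -e; field; split => //; lra.
  apply: Rle_Rpower; lra.
have h1 : (INR s <= (1 + 2 ^ a / 3 ^ a) * INR h).
  apply: (Rmult_le_reg_r (3 ^ a)) => //.
  have -> : ((1 + 2 ^ a / 3 ^ a) * INR h * 3 ^ a = (3 ^ a + 2 ^ a) * INR h) by field; lra.
  exact: hR.
apply: Rle_trans h1 _; apply: Rmult_le_compat_r => //; lra.
Qed.
Local Close Scope R_scope.


Theorem lemma8p9 : exists N : nat, forall n : nat, (N <= n)%N ->
  (H n <= S n)%N /\
  Rle (INR (S n)) (Rmult (Rplus (INR 1) (Rpower (Rdiv (INR 3) (INR 2)) (Rdiv (Ropp (INR n)) (INR 3)))) (INR (H n))).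
Proof.
exists 100 => n hn; split.
  rewrite H_sum S_eq; last by apply: leq_trans hn.
  rewrite -sum_card; apply: leq_sum => C _; exact: perC_le.
apply: (real_step (a := aa n)).
  rewrite H_sum S_eq; last by apply: leq_trans hn.
  rewrite -sum_card big_distrl big_distrr /=; apply: leq_sum => C _; exact: perC_ge.
rewrite /aa; lia.
Qed.
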